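(* Let $f_1,f_2,f_3$ be functions on an open interval $I$ and let $X_{\mathbb{F}}=\begin{pmatrix}0&f_1&0&0\\-f_1&0&f_2&0\\0&-f_2&0&f_3\\0&0&-f_3&0\end{pmatrix}$. Let $\gamma: I\to\mathbb{E}^4$ be a $2$-regular curve which admits a frame $\mathbb{F}$ with coefficient matrix $X_{\mathbb{F}}$. Then $\gamma$ admits a frame $\mathbb{D}$ with coefficient matrix $X_{\mathbb{D}}=\begin{pmatrix}0&d_1&0&0\\-d_1&0&d_2&d_3\\0&-d_2&0&0\\0&-d_3&0&0\end{pmatrix}$, where $d_1=\epsilon f_1$, $d_2=\epsilon f_2\cos\left(\int f_3\,ds\right)$, $d_3=-\kappa f_2\sin\left(\int f_3\,ds\right)$ for some $\epsilon,\kappa\in\{1,-1\}$ (here $\int f_3\,ds$ denotes an antiderivative of $f_3$).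
   Context: A regular curve $\gamma: I\to\mathbb{E}^4$ is considered with arc-length parameter $s$; $\mathbb{T}=\gamma'$ is its unit tangent vector, and $\gamma$ is $2$-regular if $\mathbb{T}'$ is nowhere vanishing. A frame on $\gamma$ is an ordered orthonormal frame $(\mathbb{T},\mathbb{Z}_1,\mathbb{Z}_2,\mathbb{Z}_3)$ of smooth vector fields along $\gamma$ whose first vector is $\mathbb{T}$; it is identified with the smooth map $\mathbb{Z}: I\to O(4)$ whose rows are these vectors. Its coefficient matrix is the $\mathfrak{o}(4)$-valued function $X$ with $\mathbb{Z}'=X\mathbb{Z}$. *)

(* Defs.v *)
From HB Require Import structures.
From mathcomp Require Import all_boot all_order all_algebra.
From mathcomp Require Import all_classical all_reals all_analysis.
Set Implicit Arguments. Unset Strict Implicit. Unset Printing Implicit Defensive.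
Import Order.TTheory GRing.Theory Num.Theory.
Import numFieldNormedType.Exports.
Local Open Scope classical_set_scope.
Local Open Scope ring_scope.

Section Defs.
Variable R : realType.

Definition smooth_on (I : set R) (g : R -> R) : Prop :=
  forall (n : nat) (x : R), I x -> derivable (iter n (@derive1 R R) g) x 1.

Definition mxderiv (m n : nat) (Z : R -> 'M[R]_(m, n)) : R -> 'M[R]_(m, n) :=
  fun s => \matrix_(i, j) derive1 (fun t => Z t i j) s.

Definition mx_smooth_on (m n : nat) (I : set R) (Z : R -> 'M[R]_(m, n)) : Prop :=
  forall i j, smooth_on I (fun t => Z t i j).

Definition tangent (gamma : R -> 'rV[R]_4) : R -> 'rV[R]_4 := mxderiv gamma.

Definition arclength_curve (I : set R) (gamma : R -> 'rV[R]_4) : Prop :=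
  mx_smooth_on I gamma /\
  forall s, I s -> (tangent gamma s *m (tangent gamma s)^T) 0 0 = 1.

Definition two_regular (I : set R) (gamma : R -> 'rV[R]_4) : Prop :=
  forall s, I s -> mxderiv (tangent gamma) s != 0.

Definition is_frame (I : set R) (gamma : R -> 'rV[R]_4) (Z : R -> 'M[R]_4) : Prop :=
  mx_smooth_on I Z /\
  forall s, I s -> Z s *m (Z s)^T = 1%:M /\ row 0 (Z s) = tangent gamma s.

Definition has_coeff (I : set R) (Z X : R -> 'M[R]_4) : Prop :=
  forall s, I s -> mxderiv Z s = X s *m Z s.

Definition XF (a b c : R) : 'M[R]_4 :=
  \matrix_(i, j)
    match nat_of_ord i, nat_of_ord j with
    | 0%N, 1%N => a | 1%N, 0%N => - a
    | 1%N, 2%N => b | 2%N, 1%N => - b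
    | 2%N, 3%N => c | 3%N, 2%N => - c
    | _, _ => 0
    end.

Definition XD (a b c : R) : 'M[R]_4 :=
  \matrix_(i, j)
    match nat_of_ord i, nat_of_ord j with
    | 0%N, 1%N => a | 1%N, 0%N => - a
    | 1%N, 2%N => b | 2%N, 1%N => - b
    | 1%N, 3%N => c | 3%N, 1%N => - c
    | _, _ => 0
    end.

End Defs.

(* Main.v *)
Require Import Defs.
From HB Require Import structures.
From mathcomp Require Import all_boot all_order all_algebra.
From mathcomp Require Import all_classical all_reals all_analysis.
From mathcomp Require Import lra ring.
Import Order.TTheory GRing.Theory Num.Theory.
Import numFieldNormedType.Exports.
Local Open Scope classical_set_scope.
Local Open Scope ring_scope.
Set Implicit Arguments. Unset Strict Implicit.

Section S.
Variables (R : realType) (I : set R) (hI : open I).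

Lemma loc_near (f g : R -> R) x : I x -> (forall y, I y -> f y = g y) ->
  {near x, f =1 g}.
Proof.
move=> Ix fg. have : nbhs x I by apply: open_nbhs_nbhs; split.
by apply: filterS.
Qed.

Lemma loc_der (f g : R -> R) x : I x -> (forall y, I y -> f y = g y) ->
  derive1 f x = derive1 g x /\ (derivable f x 1 -> derivable g x 1).
Proof.
move=> Ix fg; rewrite !derive1E; split.
  by apply: near_eq_derive; apply: loc_near.
by apply: near_eq_derivable; apply: loc_near.
Qed.

Lemma loc_iter n f g : (forall y, I y -> f y = g y) ->
  forall y, I y -> iter n (@derive1 R R) f y = iter n (@derive1 R R) g y.
Proof.
elim: n => //= n IH fg y Iy.
by case: (loc_der Iy (IH fg)).
Qed.

Definition Sm n (f : R -> R) := forall k, (k <= n)%N -> forall x, I x ->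
  derivable (iter k (@derive1 R R) f) x 1.

Lemma Sm_loc n f g : (forall y, I y -> f y = g y) -> Sm n f -> Sm n g.
Proof.
move=> fg Sf k kn x Ix.
have := (loc_der Ix (loc_iter k fg)).2; apply; exact: Sf.
Qed.

Lemma Sm_S n f : Sm n.+1 f <-> (forall x, I x -> derivable f x 1) /\ Sm n (derive1 f).
Proof.
split.
  move=> Sf; split; first exact: (Sf 0%N).
  move=> k kn x Ix; rewrite -iterSr; exact: Sf.
move=> [df Sf] [|k] kn x Ix; first exact: df.
rewrite iterSr; exact: Sf.
Qed.

Lemma Sm_le n f : Sm n.+1 f -> Sm n f.
Proof. move=> Sf k kn; apply: Sf; exact: leqW. Qed.

Lemma Sm_cst n a : Sm n (fun=> a).
Proof.
elim: n a => [|n IH] a.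
  move=> [|k] // _ x _; exact: derivable_cst.
apply/Sm_S; split; first by move=> x _; exact: derivable_cst.
have -> : derive1 (fun=> a) = (fun=> 0 : R).
  by apply/funext => x; rewrite derive1_cst.
exact: IH.
Qed.

Lemma Sm_add n f g : Sm n f -> Sm n g -> Sm n (fun t => f t + g t).
Proof.
elim: n f g => [|n IH] f g.
  move=> Sf Sg [|k] // _ x Ix; apply: derivableD; [exact: (Sf 0%N)|exact: (Sg 0%N)].
move=> /Sm_S [df Sf] /Sm_S [dg Sg]; apply/Sm_S; split.
  by move=> x Ix; apply: derivableD; [exact: df|exact: dg].
apply: (Sm_loc _ (IH _ _ Sf Sg)) => y Iy.
by rewrite [RHS]derive1E deriveD ?derive1E //; [exact: df|exact: dg].
Qed.

Lemma Sm_opp n f : Sm n f -> Sm n (fun t => - f t).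
Proof.
elim: n f => [|n IH] f.
  move=> Sf [|k] // _ x Ix; apply: derivableN; exact: (Sf 0%N).
move=> /Sm_S [df Sf]; apply/Sm_S; split.
  by move=> x Ix; apply: derivableN; exact: df.
apply: (Sm_loc _ (IH _ Sf)) => y Iy.
by rewrite [RHS]derive1E deriveN ?derive1E //; exact: df.
Qed.

Lemma Sm_mul n f g : Sm n f -> Sm n g -> Sm n (fun t => f t * g t).
Proof.
elim: n f g => [|n IH] f g.
  move=> Sf Sg [|k] // _ x Ix; apply: derivableM; [exact: (Sf 0%N)|exact: (Sg 0%N)].
move=> Sf1 Sg1.
have Sf0 := Sm_le Sf1; have Sg0 := Sm_le Sg1.
move: Sf1 Sg1 => /Sm_S [df Sf] /Sm_S [dg Sg]; apply/Sm_S; split.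
  by move=> x Ix; apply: derivableM; [exact: df|exact: dg].
apply: (Sm_loc _ (Sm_add (IH _ _ Sf Sg0) (IH _ _ Sf0 Sg))) => y Iy.
rewrite [RHS]derive1E deriveM ?derive1E; [|exact: df|exact: dg].
rewrite /=; (have smul : forall a b : R, a *: b = a * b by []); rewrite !smul; lra.
Qed.

Lemma Sm_sum m n (h : 'I_m -> R -> R) : (forall k, Sm n (h k)) ->
  Sm n (fun t => \sum_(k < m) h k t).
Proof.
elim: m h => [|m IH] h Sh.
  apply: (@Sm_loc n (fun=> 0)); last exact: Sm_cst.
  by move=> y _; rewrite big_ord0.
apply: (Sm_loc _ (Sm_add (IH (fun k => h (widen_ord (leqnSn m) k)) (fun k => Sh _)) (Sh ord_max))).
by move=> y _; rewrite big_ord_recr.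
Qed.


Lemma derivable_comp1 (f g : R -> R) x : derivable f x 1 -> derivable g (f x) 1 ->
  derivable (g \o f) x 1.
Proof.
move=> /derivable1_diffP df /derivable1_diffP dg; apply/derivable1_diffP.
exact: differentiable_comp.
Qed.

Lemma derive1_cos x : derive1 (@cos R) x = - sin x.
Proof. by rewrite derive1E derive_val. Qed.

Lemma derive1_sin x : derive1 (@sin R) x = cos x.
Proof. by rewrite derive1E derive_val. Qed.

End S.

Section S2.
Variables (R : realType) (I : set R) (hI : open I).
Lemma Sm_trig (th h : R -> R) :
  (forall x, I x -> derivable th x 1 /\ derive1 th x = h x) ->
  (forall n, Sm I n h) ->
  forall n, Sm I n (fun t => cos (th t)) /\ Sm I n (fun t => sin (th t)).
Proof.
move=> Hth Sh.
have dc : forall x, I x -> derivable (fun t => cos (th t)) x 1.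
  move=> x Ix; apply: (@derivable_comp1 R th cos); [exact: (Hth x Ix).1|exact: derivable_cos].
have ds : forall x, I x -> derivable (fun t => sin (th t)) x 1.
  move=> x Ix; apply: (@derivable_comp1 R th sin); [exact: (Hth x Ix).1|exact: derivable_sin].
elim=> [|n [IHc IHs]].
  by split; move=> [|k] // _ x Ix /=.
split; apply/Sm_S; split => //.
- apply: (Sm_loc hI _ (Sm_opp hI (Sm_mul hI IHs (Sh n)))) => y Iy.
  rewrite (@derive1_comp R th cos); [|exact: (Hth y Iy).1|exact: derivable_cos].
  by rewrite derive1_cos (Hth y Iy).2 mulNr.
- apply: (Sm_loc hI _ (Sm_mul hI IHc (Sh n))) => y Iy.
  rewrite (@derive1_comp R th sin); [|exact: (Hth y Iy).1|exact: derivable_sin].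
  by rewrite derive1_sin (Hth y Iy).2.
Qed.
End S2.

Lemma mxderiv_mul (R : realType) m n p (A : R -> 'M[R]_(m, n)) (B : R -> 'M[R]_(n, p)) s :
  (forall i j, derivable (fun t => A t i j) s 1) ->
  (forall i j, derivable (fun t => B t i j) s 1) ->
  mxderiv (fun t => A t *m B t) s = mxderiv A s *m B s + A s *m mxderiv B s.
Proof.
move=> dA dB; apply/matrixP => i j; rewrite !mxE.
have -> : (fun t => (A t *m B t) i j) = \sum_(k < n) (fun t => A t i k * B t k j).
  by rewrite fct_sumE; apply/funext => t; rewrite mxE.
rewrite derive1E derive_sum; last by move=> k; apply: derivableM.
rewrite -big_split /=; apply: eq_bigr => k _.
rewrite deriveM // !mxE !derive1E /=.
by rewrite addrC [_ * B s k j]mulrC.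
Qed.

Section Main.
Variable R : realType.

Definition mf (th : R -> R) (i j : 'I_4) : R -> R :=
  match nat_of_ord i, nat_of_ord j with
  | 0%N, 0%N => fun=> 1 | 1%N, 1%N => fun=> 1
  | 2%N, 2%N => fun t => cos (th t) | 2%N, 3%N => fun t => - sin (th t)
  | 3%N, 2%N => fun t => sin (th t) | 3%N, 3%N => fun t => cos (th t)
  | _, _ => fun=> 0 end.

Definition Mx (th : R -> R) (t : R) : 'M[R]_4 := \matrix_(i, j) mf th i j t.

Definition Mp (th h : R -> R) (t : R) : 'M[R]_4 := \matrix_(i, j)
  match nat_of_ord i, nat_of_ord j with
  | 2%N, 2%N => - sin (th t) * h t | 2%N, 3%N => - (cos (th t) * h t)
  | 3%N, 2%N => cos (th t) * h t | 3%N, 3%N => - sin (th t) * h t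
  | _, _ => 0 end.

Lemma Mx_orth th t : Mx th t *m (Mx th t)^T = 1%:M.
Proof.
have := cos2Dsin2 (th t).
move=> H; apply/matrixP => i j; rewrite !mxE !big_ord_recr !big_ord0 /= !mxE /mf.
move: i j => [[|[|[|[|i]]]] Hi] [[|[|[|[|j]]]] Hj] //=; try lra.
Qed.

Lemma Mx_row0 th t (F : 'M[R]_4) : row 0 (Mx th t *m F) = row 0 F.
Proof.
apply/rowP => j; rewrite !mxE !big_ord_recl !big_ord0 /= !mxE /mf /=.
rewrite mul1r !mul0r !addr0; congr (F _ j); exact/val_inj.
Qed.

Lemma Mx_ident th f1 f2 f3 t :
  Mp th f3 t + Mx th t *m XF (f1 t) (f2 t) (f3 t) =
  XD (1 * f1 t) (1 * f2 t * cos (th t)) (- -1 * f2 t * sin (th t)) *m Mx th t.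
Proof.
have H := cos2Dsin2 (th t).
apply/matrixP => i j; rewrite !mxE !big_ord_recr !big_ord0 /= !mxE /mf.
move: i j => [[|[|[|[|i]]]] Hi] [[|[|[|[|j]]]] Hj] //=; try lra.
have E : f2 t = f2 t * (cos (th t) ^+ 2 + sin (th t) ^+ 2) by rewrite H mulr1.
rewrite {1}E; ring.
Qed.

End Main.

Unset Implicit Arguments. Set Strict Implicit.

Theorem proposition3 (R : realType) (I : set R)
  (hIopen : open I) (hIint : is_interval I)
  (f1 f2 f3 : R -> R) (gamma : R -> 'rV[R]_4) (F : R -> 'M[R]_4)
  (hcurve : arclength_curve I gamma) (hreg : two_regular I gamma)
  (hF : is_frame I gamma F)
  (hXF : has_coeff I F (fun s => XF (f1 s) (f2 s) (f3 s)))
  (theta : R -> R)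
  (htheta : forall s, I s -> derivable theta s 1 /\ derive1 theta s = f3 s) :
  exists (eps kappa : R) (D : R -> 'M[R]_4),
    (eps = 1 \/ eps = -1) /\ (kappa = 1 \/ kappa = -1) /\
    is_frame I gamma D /\
    has_coeff I D (fun s => XD (eps * f1 s)
                               (eps * f2 s * cos (theta s))
                               (- kappa * f2 s * sin (theta s))).
Proof.
Opaque Sm.
case: hF => Fsm Fo.
have SF : forall i j n, Sm I n (fun t => F t i j) by move=> i j n k _; exact: Fsm.
pose o2 := @Ordinal 4 2 isT. pose o3 := @Ordinal 4 3 isT.
have Sf3 : forall n, Sm I n f3.
  move=> n.
  apply: (Sm_loc hIopen (f := fun t => \sum_(k < 4) derive1 (fun u => F u o2 k) t * F t o3 k)).
    move=> y Iy.
    have E : (mxderiv F y *m (F y)^T) o2 o3 = f3 y.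
      by rewrite (hXF y Iy) -mulmxA (Fo y Iy).1 mulmx1 mxE.
    rewrite -E mxE; apply: eq_bigr => k _; by rewrite !mxE.
  apply: (Sm_sum hIopen) => k; apply: (Sm_mul hIopen); last exact: SF.
  by have /Sm_S [] := SF o2 k n.+1.
have Strig := Sm_trig hIopen htheta Sf3.
have Smf : forall i j n, Sm I n (mf theta i j).
{ move=> [[|[|[|[|i]]]] Hi]; last by [].
  all: move=> [[|[|[|[|j]]]] Hj] n; last by [].
  all: rewrite /mf /=.
  all: match goal with
   | |- Sm _ _ (fun _ => cos _) => exact: (Strig n).1
   | |- Sm _ _ (fun _ => sin _) => exact: (Strig n).2
   | |- Sm _ _ (fun _ => - sin _) => exact: (Sm_opp hIopen (Strig n).2)
   | |- _ => exact: Sm_cst end. }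
have dmf : forall i j s, I s -> derivable (mf theta i j) s 1.
  by move=> i j s Is; exact: (Smf i j 0%N 0%N (leqnn 0) s Is).
have Mxf : forall i j, (fun t => Mx theta t i j) = mf theta i j.
  by move=> i j; apply/funext => t; rewrite mxE.
have dM : forall s, I s -> mxderiv (Mx theta) s = Mp theta f3 s.
{ move=> s Is; apply/matrixP => i j.
  rewrite /mxderiv mxE Mxf.
  have dc : derive1 (fun t => cos (theta t)) s = - sin (theta s) * f3 s.
    rewrite (@derive1_comp R theta cos); [|exact: (htheta s Is).1|exact: derivable_cos].
    by rewrite derive1_cos (htheta s Is).2.
  have ds : derive1 (fun t => sin (theta t)) s = cos (theta s) * f3 s.
    rewrite (@derive1_comp R theta sin); [|exact: (htheta s Is).1|exact: derivable_sin].
    by rewrite derive1_sin (htheta s Is).2.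
  have dns : derive1 (fun t => - sin (theta t)) s = - (cos (theta s) * f3 s).
    rewrite derive1E deriveN; first by rewrite -derive1E ds.
    exact: ((Strig 0%N).2 0%N (leqnn 0) s Is).
  rewrite /Mp mxE.
  move: i j => [[|[|[|[|i]]]] Hi]; last by [].
  all: move=> [[|[|[|[|j]]]] Hj]; last by [].
  all: rewrite /mf /=.
  all: match goal with
   | |- derive1 (fun _ => cos _) _ = _ => exact: dc
   | |- derive1 (fun _ => sin _) _ = _ => exact: ds
   | |- derive1 (fun _ => - sin _) _ = _ => exact: dns
   | |- _ => exact: derive1_cst end. }
exists 1, (-1), (fun t => Mx theta t *m F t).
split; first by left. split; first by right.
split.
  split.
    move=> i j n x Ix.
    have S : forall m, Sm I m (fun t => (Mx theta t *m F t) i j).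
      move=> m; apply: (Sm_loc hIopen (f := fun t => \sum_(k < 4) mf theta i k t * F t k j)).
        by move=> y _; rewrite !mxE; apply: eq_bigr => k _; rewrite mxE.
      apply: (Sm_sum hIopen) => k; apply: (Sm_mul hIopen); [exact: Smf|exact: SF].
    exact: (S n n (leqnn n) x Ix).
  move=> s Is; split.
    by rewrite trmx_mul mulmxA -(mulmxA (Mx theta s)) (Fo s Is).1 mulmx1 Mx_orth.
  by rewrite Mx_row0 (Fo s Is).2.
move=> s Is.
rewrite mxderiv_mul; last first.
- by move=> i j; exact: (SF i j 0%N 0%N (leqnn 0) s Is).
- by move=> i j; rewrite Mxf; exact: dmf.
rewrite dM // (hXF s Is) mulmxA -mulmxDl Mx_ident.
by rewrite -mulmxA.
Qed.
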